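(* Let $S=\{1,2\}$ and let $\mathcal{F}$ be the family of finite disjoint unions of $S$-colored chains whose colors alternate along the chain. For $i\in S$, $n\ge1$, let $L(i,n)$ be the alternating chain with $n$ elements whose maximal element (root) is colored $i$. Then in $\mathfrak{n}_{\mathcal{F}}$ with bracket $[x,y]=x\rhd y-y\rhd x$: $[\delta_{L(i,2k)},\delta_{L(j,2l)}]=0$; $[\delta_{L(i,2k)},\delta_{L(j,2l+1)}]=-\delta_{L(j,2(k+l)+1)}$ if $i=j$ and $=\delta_{L(j,2(k+l)+1)}$ if $i\ne j$; $[\delta_{L(i,2k+1)},\delta_{L(j,2l+1)}]=\delta_{L(j,2(k+l+1))}-\delta_{L(i,2(k+l+1))}$. Moreover the linear map $\phi:\mathfrak{n}_{\mathcal{F}}\to L\mathfrak{gl}_2^+$ given by $\phi(\delta_{L(1,2k+1)})=e\otimes t^k$, $\phi(\delta_{L(2,2k+1)})=f\otimes t^{k+1}$ $(k\ge0)$, $\phi(\delta_{L(1,2k)})=-h_1\otimes t^k$, $\phi(\delta_{L(2,2k)})=-h_2\otimes t^k$ $(k\ge1)$ is an isomorphism of Lie algebras.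
   Context: $\mathfrak{n}_{\mathcal{F}}$ is the $\mathbb{Q}$-vector space with basis $\delta_P$, $P$ ranging over isomorphism classes of connected members of $\mathcal{F}$, with product $\delta_a\rhd\delta_b=\sum_{t} n(a,b,t)\delta_t$ (sum over connected $t\in\mathcal{F}$ up to isomorphism), where $n(a,b,t)$ is the number of covering relations $x\lessdot y$ in $t$ such that $\{z\in t: z\le x\}\cong a$ and its complement $\cong b$ as colored posets (i.e. the number of ways $t$ is obtained by grafting the maximal element (root) of $a$ directly below an element of $b$). In $\mathfrak{gl}_2$ over $\mathbb{Q}$: $e=E_{1,2}$, $f=E_{2,1}$, $h_1=E_{1,1}$, $h_2=E_{2,2}$. $L\mathfrak{gl}_2=\mathfrak{gl}_2\otimes\mathbb{Q}[t,t^{-1}]$ with $[X\otimes t^m,Y\otimes t^n]=[X,Y]\otimes t^{m+n}$, and $L\mathfrak{gl}_2^+=\mathbb{Q}e\oplus(\mathfrak{gl}_2\otimes t\mathbb{Q}[t])$. *)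

(* Defs.v *)
From HB Require Import structures.
From mathcomp Require Import all_boot all_order all_algebra.
From Stdlib Require Import ClassicalEpsilon.
Set Implicit Arguments. Unset Strict Implicit. Unset Printing Implicit Defensive.
Import Order.TTheory GRing.Theory Num.Theory.
Local Open Scope ring_scope.

(* An S-colored chain (S = {1,2}) is encoded by the sequence of colors of its
   elements listed from the minimal element (head) to the maximal element /
   root (last).  Two colored chains are isomorphic as colored posets iff their
   color sequences are equal, so a sequence is the canonical representative of
   its isomorphism class. *)

Definition chainF (s : seq nat) : bool :=
  [&& s != [::], all (fun c => (c == 1)%N || (c == 2)%N) s
    & sorted (fun x y : nat => x != y) s].

Definition Lch (i n : nat) : seq nat :=
  [seq (if odd (n.-1 - p) then (3 - i)%N else i) | p <- iota 0 n].

(* n(a,b,t): number of covering relations x <. y in t (x at position p,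
   y at position p+1) with downset {z <= x} = take p.+1 t isomorphic to a and
   its complement drop p.+1 t isomorphic to b. *)
Definition ncount (a b t : seq nat) : nat :=
  count (fun p => (take p.+1 t == a) && (drop p.+1 t == b)) (iota 0 (size t).-1).

(* An element of n_F = sum_P c_P delta_P is represented by its coefficient
   function  seq nat -> rat , vanishing off connected members of F and of
   finite support. *)
Definition isNF (f : seq nat -> rat) : Prop :=
  (forall s, ~~ chainF s -> f s = 0) /\
  (exists N : nat, forall s, (N < size s)%N -> f s = 0).

Definition deltaF (P : seq nat) : seq nat -> rat := fun s => (s == P)%:R.

(* bilinear product  delta_a |> delta_b = sum_t n(a,b,t) delta_t ; only
   prefixes a and suffixes b of t can have n(a,b,t) <> 0. *)
Definition prodF (f g : seq nat -> rat) : seq nat -> rat := fun t =>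
  if chainF t then
    \sum_(a <- [seq take q t | q <- iota 0 (size t).+1])
      \sum_(b <- [seq drop q t | q <- iota 0 (size t).+1])
         f a * g b * (ncount a b t)%:R
  else 0.

Definition brF (f g : seq nat -> rat) : seq nat -> rat :=
  fun t => prodF f g t - prodF g f t.

(* gl_2 (x) Q[t] is identified with 2x2 matrices over Q[t]; the loop bracket
   [X t^m, Y t^n] = [X,Y] t^(m+n) is the matrix commutator.  Index 0 <-> 1,
   index 1 <-> 2, so e = E_{0,1}, f = E_{1,0}, h_1 = E_{0,0}, h_2 = E_{1,1}.
   L gl_2^+ = Q e (+) gl_2 (x) tQ[t]: all constant terms vanish except
   possibly that of the (0,1) entry. *)
Definition isLglP (A : 'M[{poly rat}]_2) : Prop :=
  (A 0 0)`_0 = 0 /\ (A 1 0)`_0 = 0 /\ (A 1 1)`_0 = 0.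

Definition brL (A B : 'M[{poly rat}]_2) : 'M[{poly rat}]_2 := A * B - B * A.

Definition suppBound (f : seq nat -> rat) : nat :=
  epsilon (inhabits 0%N) (fun N : nat => forall s, (N < size s)%N -> f s = 0).

Definition phiCoef (f : seq nat -> rat) (a b k : nat) : rat :=
  match a, b with
  | 0, 1 => f (Lch 1 k.*2.+1)
  | 1, 0 => if k is k'.+1 then f (Lch 2 k'.*2.+1) else 0
  | 0, 0 => if k is 0 then 0 else - f (Lch 1 k.*2)
  | _, _ => if k is 0 then 0 else - f (Lch 2 k.*2)
  end.

Definition phi (f : seq nat -> rat) : 'M[{poly rat}]_2 :=
  \matrix_(a < 2, b < 2) \poly_(k < (suppBound f).+1) phiCoef f a b k.

(* Main.v *)
Require Import Defs.
From HB Require Import structures.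
From mathcomp Require Import all_boot all_order all_algebra.
From Stdlib Require Import Lia ClassicalEpsilon.
Set Implicit Arguments. Unset Strict Implicit. Unset Printing Implicit Defensive.
Import Order.TTheory GRing.Theory Num.Theory.
Local Open Scope ring_scope.

Ltac natify := rewrite -?plusE -?minusE -?multE.
Ltac hyps_to_prop := repeat match goal with
  | H : is_true (leq _ _) |- _ => apply (elimT ssrnat.leP) in H end.
Ltac nlia := hyps_to_prop; rewrite -?subn1 -?muln2; natify;
  first [ apply/eqP; rewrite -?plusE -?minusE -?multE; apply/eqP; lia
        | apply/ssrnat.leP; natify; lia | lia ].

Definition cc (c r : nat) : nat := if odd r then (3 - c)%N else c.

Lemma Lch_cat c a b : (c <= 3)%N -> Lch c (a + b) = Lch (cc c b) a ++ Lch c b.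
Proof.
move=> c3; rewrite /Lch iotaD map_cat add0n; congr (_ ++ _).
  apply/eq_in_map => p; rewrite mem_iota add0n => /andP[_ hp].
  have -> : ((a + b).-1 - p = b + (a.-1 - p))%N by nlia.
  rewrite oddD /cc; case: (odd b); case: (odd _) => //=.
  by rewrite subKn.
have -> : iota a b = map (addn a) (iota 0 b) by rewrite -iotaDl addn0.
rewrite -map_comp; apply/eq_in_map => p.
rewrite mem_iota add0n => /andP[_ hp] /=.
by have -> : ((a + b).-1 - (a + p) = b.-1 - p)%N by nlia.
Qed.

Lemma size_Lch c n : size (Lch c n) = n.
Proof. by rewrite /Lch size_map size_iota. Qed.

Lemma Lch0 c : Lch c 0 = [::].
Proof. by []. Qed.

Lemma Lch_rcons c n : (c <= 3)%N -> Lch c n.+1 = rcons (Lch (3 - c) n) c.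
Proof. by move=> c3; rewrite -addn1 Lch_cat // -cats1. Qed.

Lemma last_Lch c n x : (c <= 3)%N -> last x (Lch c n.+1) = c.
Proof. by move=> c3; rewrite Lch_rcons // last_rcons. Qed.

Definition col12 (c : nat) : bool := (c == 1)%N || (c == 2)%N.

Lemma col12_3 c : col12 c -> (c <= 3)%N.
Proof. by case/orP=> /eqP->. Qed.

Lemma col12_sub c : col12 c -> col12 (3 - c).
Proof. by case/orP=> /eqP->. Qed.

Lemma col12_cc c r : col12 c -> col12 (cc c r).
Proof. by rewrite /cc; case: (odd r) => // /col12_sub. Qed.

Lemma chainF_Lch c n : col12 c -> (0 < n)%N -> chainF (Lch c n).
Proof.
elim: n c => // n IH c hc _.
case: n IH => [|n] IH; first by rewrite /chainF /=; case/orP: hc => /eqP->.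
have c3 := col12_3 hc.
have := IH _ (col12_sub hc) isT; rewrite (Lch_rcons n.+1 c3) /chainF.
case/and3P=> _ ha hs; apply/and3P; split.
- by rewrite -size_eq0 size_rcons.
- by rewrite all_rcons ha andbT.
case E: (Lch (3 - c) n.+1) hs => [//|y s] /= hs.
rewrite rcons_path hs /=.
have : last y s = (3 - c)%N.
  by have := last_Lch n 0 (leq_subr c 3); rewrite E.
by move->; case/orP: hc => /eqP->.
Qed.

Lemma chainF_inv s : chainF s ->
  [/\ s = Lch (last 0%N s) (size s), col12 (last 0%N s) & (0 < size s)%N].
Proof.
elim/last_ind: s => [|s x IH]; first by [].
rewrite /chainF all_rcons => /and3P[_ /andP[hx ha] hs].
rewrite last_rcons size_rcons; split => //.
case: s IH ha hs => [|y s] IH ha hs; first by case/orP: hx => /eqP->.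
move: hs; rewrite /= rcons_path => /andP[hs hneq].
have [E c12 _] := IH (introT and3P (And3 isT ha hs)).
rewrite Lch_rcons ?col12_3 // -rcons_cons; apply: (congr1 (rcons^~ x)).
rewrite {1}E /=.
suff -> : last y s = (3 - x)%N by [].
move: c12 hneq hx; rewrite /= /col12.
move: (last y s) => l.
by case/orP=> /eqP ->; move=> h; case/orP=> /eqP hh; rewrite hh in h *.
Qed.

Lemma Lch_eq c c' n m : (0 < n)%N -> (c <= 3)%N -> (c' <= 3)%N ->
  (Lch c n == Lch c' m) = (n == m) && (c == c').
Proof.
move=> n0 c3 c'3; apply/eqP/andP => [E|[/eqP<- /eqP<-]] //.
have nm : n = m by rewrite -(size_Lch c n) E size_Lch.
subst m; split => //; case: n n0 E => // n _ E.
by rewrite -(last_Lch n 0 c3) E last_Lch.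
Qed.

Lemma natr_count (T : eqType) (a : pred T) (s : seq T) :
  (count a s)%:R = \sum_(x <- s) (a x)%:R :> rat.
Proof.
elim: s => [|x s IH]; first by rewrite big_nil.
by rewrite big_cons /= natrD IH.
Qed.

Lemma sum_seq1 (s : seq nat) (F : nat -> rat) x : x \in s -> uniq s ->
  \sum_(q <- s) F q * (q == x)%:R = F x.
Proof.
move=> xs us; rewrite (bigD1_seq x) //= eqxx mulr1 big1 ?addr0 //.
by move=> q /negbTE ->; rewrite mulr0.
Qed.

Lemma natr_and (a b : bool) : (a && b)%:R = a%:R * b%:R :> rat.
Proof. by case: a; case: b; rewrite ?mulr0 ?mulr1. Qed.

Lemma prodF_take f g t : chainF t -> prodF f g t =
  \sum_(p <- iota 0 (size t).-1) f (take p.+1 t) * g (drop p.+1 t).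
Proof.
move=> ct; rewrite /prodF ct big_map.
under eq_bigr do rewrite big_map.
transitivity (\sum_(q <- iota 0 (size t).+1) \sum_(q' <- iota 0 (size t).+1) \sum_(p <- iota 0 (size t).-1)
   f (take q t) * g (drop q' t) * ((take p.+1 t == take q t) && (drop p.+1 t == drop q' t))%:R).
  by apply: eq_bigr => q _; apply: eq_bigr => q' _; rewrite /ncount natr_count mulr_sumr.
under eq_bigr => q _ do rewrite exchange_big.
rewrite exchange_big.
apply: eq_big_seq => p; rewrite mem_iota add0n => hp.
have hp1 : (p.+1 <= size t)%N by case/andP: hp => _; case: (size t) => // n /= /leqW.
have hin : p.+1 \in iota 0 (size t).+1 by rewrite mem_iota add0n ltnS.
rewrite -[RHS](sum_seq1 (fun q => f (take q t) * g (drop p.+1 t)) hin (iota_uniq _ _)).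
apply: eq_big_seq => q; rewrite mem_iota add0n ltnS => hq.
rewrite -[in RHS](sum_seq1 (fun q' => f (take q t) * g (drop q' t)) hin (iota_uniq _ _)) mulr_suml.
apply: eq_big_seq => q'; rewrite mem_iota add0n ltnS => hq'.
have -> : (take p.+1 t == take q t) = (q == p.+1).
  apply/eqP/eqP => [E|->] //.
  move/andP: hq => [_ hq].
  by have := congr1 size E; rewrite !size_takel.
have -> : (drop p.+1 t == drop q' t) = (q' == p.+1).
  apply/eqP/eqP => [E|->] //.
  have := congr1 size E; rewrite !size_drop => h.
  move/andP: hq' => [_ hq'].
  by apply/eqP; rewrite -(eqn_sub2lE hq' hp1) h.
by rewrite natr_and !mulrA [_ * (q == _)%:R * _]mulrAC.
Qed.

Lemma prodF_nil f g : prodF f g [::] = 0.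
Proof. by []. Qed.

Lemma prodF_Lch f g c n R : f [::] = 0 -> g [::] = 0 -> col12 c -> (n < R)%N ->
  prodF f g (Lch c n) = \sum_(r < R) f (Lch (cc c r) (n - r)) * g (Lch c r).
Proof.
move=> hf hg hc nR.
have c3 := col12_3 hc.
rewrite -(big_mkord xpredT (fun r => f (Lch (cc c r) (n - r)) * g (Lch c r))).
rewrite (big_cat_nat (n := n.+1)) //=.
rewrite [X in _ + X]big1_seq ?addr0; last first.
  move=> r /andP[_]; rewrite mem_index_iota => /andP[hr _].
  have -> : (n - r = 0)%N by apply/eqP; rewrite subn_eq0 ltnW.
  by rewrite Lch0 hf mul0r.
case: n nR => [|n] nR.
  by rewrite big_nat1 /= hf mul0r.
rewrite prodF_take ?chainF_Lch // size_Lch.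
set G := fun q => f (take q (Lch c n.+1)) * g (drop q (Lch c n.+1)).
transitivity (\sum_(0 <= q < n.+2) G q).
  rewrite big_nat_recl // big_nat_recr // /G take0 hf mul0r add0r.
  rewrite drop_oversize ?size_Lch // hg mulr0 Monoid.mulm1.
  by rewrite /index_iota subn0.
rewrite big_nat_rev /=.
apply: eq_big_nat => r; rewrite add0n subSS => /andP[_ hr].
rewrite /G.
have -> : Lch c n.+1 = Lch (cc c r) (n.+1 - r) ++ Lch c r by rewrite -Lch_cat ?subnK.
by rewrite take_size_cat ?drop_size_cat // size_Lch.
Qed.

Lemma delta_nil P : (0 < size P)%N -> deltaF P [::] = 0.
Proof. by case: P. Qed.

Lemma delta_Lch i a c n : col12 i -> col12 c -> (0 < a)%N ->
  deltaF (Lch i a) (Lch c n) = ((n == a) && (c == i))%:R.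
Proof.
move=> hi hc a0; rewrite /deltaF.
case: n => [|n].
  case: a a0 => // a _; rewrite Lch0 Lch_rcons ?col12_3 //.
by rewrite Lch_eq // col12_3.
Qed.

Lemma sum_ord1 N (F : 'I_N.+1 -> rat) x :
  \sum_(r < N.+1) F r * (r == x :> nat)%:R = if (x < N.+1)%N then F (inord x) else 0.
Proof.
case: ltnP => h.
  rewrite (bigD1 (inord x)) //= inordK // eqxx mulr1 big1 ?addr0 // => r hr.
  rewrite (_ : (r == x :> nat) = false) ?mulr0 //; apply/negbTE.
  by apply: contra hr => /eqP hx; apply/eqP/val_inj; rewrite /= inordK // hx.
apply: big1 => r _.
rewrite (_ : (r == x :> nat) = false) ?mulr0 //; apply/negbTE.
by rewrite neq_ltn (leq_trans (ltn_ord r) h).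
Qed.

Lemma subn_eq_add (n a b : nat) : (b <= n)%N -> (n - b == a)%N = (n == a + b)%N.
Proof. by move=> h; apply/eqP/eqP => E; [rewrite -E subnK | rewrite E addnK]. Qed.

Lemma prodF_delta i j a b : col12 i -> col12 j -> (0 < a)%N -> (0 < b)%N ->
  prodF (deltaF (Lch i a)) (deltaF (Lch j b)) =1
  (fun s => if cc j b == i then deltaF (Lch j (a + b)) s else 0).
Proof.
move=> hi hj a0 b0 s.
case cs: (chainF s); last first.
  rewrite /prodF cs; case: ifP => // _; rewrite /deltaF.
  have hL : chainF (Lch j (a + b)) by rewrite chainF_Lch // addn_gt0 a0.
  by case: eqP => // E; rewrite -E cs in hL.
have [E hc n0] := chainF_inv cs; rewrite E.
move: (last 0%N s) (size s) hc n0 => c n hc n0.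
rewrite (prodF_Lch (R := n.+1)) ?delta_nil ?size_Lch //.
under eq_bigr => r _ do rewrite !delta_Lch ?col12_cc //.
rewrite delta_Lch ?addn_gt0 ?a0 //.
case: (eqVneq c j) => [<-|cj].
  under eq_bigr => r _ do rewrite andbT.
  rewrite sum_ord1 ltnS.
  case: leqP => bn.
    rewrite inordK ?ltnS // subn_eq_add //.
    by case: (cc c b == i); rewrite ?andbT ?andbF.
  case: (cc c b == i) => //; rewrite andbT.
  rewrite (_ : (n == a + b) = false) //; apply/negbTE.
  by rewrite neq_ltn ltn_addl.
rewrite andbF if_same big1 // => r _.
by rewrite andbF mulr0.
Qed.

Lemma sub3_eq i j : col12 i -> col12 j -> ((3 - j)%N == i) = (i != j).
Proof. by case/orP=> /eqP->; case/orP=> /eqP->. Qed.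

Lemma cc_even c k : cc c k.*2 = c.
Proof. by rewrite /cc odd_double. Qed.

Lemma cc_odd c k : cc c k.*2.+1 = (3 - c)%N.
Proof. by rewrite /cc /= odd_double. Qed.

Lemma ar1 k l : (k.*2 + l.*2.+1 = (k + l).*2.+1)%N.
Proof. nlia. Qed.
Lemma ar2 k l : (l.*2.+1 + k.*2 = (k + l).*2.+1)%N.
Proof. nlia. Qed.
Lemma ar3 k l : (k.*2.+1 + l.*2.+1 = (k + l).+1.*2)%N.
Proof. nlia. Qed.
Lemma ar4 k l : (l.*2.+1 + k.*2.+1 = (k + l).+1.*2)%N.
Proof. nlia. Qed.

Lemma part1 (i j k l : nat) : (i == 1%N) || (i == 2%N) -> (j == 1%N) || (j == 2%N) ->
     (0 < k)%N -> (0 < l)%N ->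
     brF (deltaF (Lch i k.*2)) (deltaF (Lch j l.*2)) =1 (fun _ => 0).
Proof.
move=> hi hj k0 l0 s; rewrite /brF !prodF_delta ?double_gt0 // !cc_even.
case: (eqVneq i j) => [->|ij]; first by rewrite ?eqxx addnC subrr.
by rewrite ?(eq_sym j i) ?(negbTE ij) subrr.
Qed.

Lemma part2 (i j k l : nat) : (i == 1%N) || (i == 2%N) -> (j == 1%N) || (j == 2%N) ->
     (0 < k)%N ->
     brF (deltaF (Lch i k.*2)) (deltaF (Lch j l.*2.+1)) =1
       (fun s => (if i == j then -1 else 1) * deltaF (Lch j (k + l).*2.+1) s).
Proof.
move=> hi hj k0 s; rewrite /brF !prodF_delta ?double_gt0 // cc_even cc_odd sub3_eq //.
case: (eqVneq i j) => [->|ij]; first by rewrite ?eqxx ar2 sub0r mulN1r.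
by rewrite ?(negbTE ij) ?(eq_sym j i) ?ij ar1 subr0 mul1r.
Qed.

Lemma part3 (i j k l : nat) : (i == 1%N) || (i == 2%N) -> (j == 1%N) || (j == 2%N) ->
     brF (deltaF (Lch i k.*2.+1)) (deltaF (Lch j l.*2.+1)) =1
       (fun s => deltaF (Lch j (k + l).+1.*2) s - deltaF (Lch i (k + l).+1.*2) s).
Proof.
move=> hi hj s; rewrite /brF !prodF_delta // !cc_odd !sub3_eq //.
case: (eqVneq i j) => [->|ij]; first by rewrite !subrr.
by rewrite ?(eq_sym j i) ?ij ar3 ar4.
Qed.

Lemma suppBound_spec f : isNF f -> forall s, (suppBound f < size s)%N -> f s = 0.
Proof.
case=> _ ex; rewrite /suppBound.
exact: (epsilon_spec (inhabits 0%N) (fun N : nat => forall s, (N < size s)%N -> f s = 0) ex).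
Qed.

Lemma isNF_nil f : isNF f -> f [::] = 0.
Proof. by case=> h _; apply: h. Qed.

Lemma coef_phi f : isNF f -> forall (a b : 'I_2) k, (phi f a b)`_k = phiCoef f a b k.
Proof.
move=> hf a b k; rewrite /phi mxE coef_poly; case: ltnP => // hk.
have sp := suppBound_spec hf; move: (suppBound f) sp hk => N sp hk.
case: a => [[|[|//]]] ?; case: b => [[|[|//]]] ? /=.
- case: k hk => // k hk; rewrite sp ?oppr0 // size_Lch; nlia.
- rewrite sp // size_Lch; nlia.
- case: k hk => // k hk; rewrite sp // size_Lch; nlia.
- case: k hk => // k hk; rewrite sp ?oppr0 // size_Lch; nlia.
Qed.

Lemma pc00 f m : f [::] = 0 -> phiCoef f 0 0 m = - f (Lch 1 m.*2).
Proof. by move=> h; case: m => //=; rewrite h oppr0. Qed.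
Lemma pc01 f m : phiCoef f 0 1 m = f (Lch 1 m.*2.+1).
Proof. by []. Qed.
Lemma pc10 f m : f [::] = 0 -> phiCoef f 1 0 m = f (Lch 2 m.*2.-1).
Proof. by move=> h; case: m => //=; rewrite h. Qed.
Lemma pc11 f m : f [::] = 0 -> phiCoef f 1 1 m = - f (Lch 2 m.*2).
Proof. by move=> h; case: m => //=; rewrite h oppr0. Qed.

Lemma part4 f : isNF f -> isLglP (phi f).
Proof. move=> hf; rewrite /isLglP; split; [|split]; by rewrite (coef_phi hf). Qed.

Lemma isNF_lin (c : rat) f g : isNF f -> isNF g -> isNF (fun s => c * f s + g s).
Proof.
move=> hf hg; split.
  by move=> s hs; rewrite hf.1 ?hg.1 // mulr0 addr0.
exists (suppBound f + suppBound g)%N => s hs.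
rewrite !suppBound_spec ?mulr0 ?addr0 //.
  by apply: leq_ltn_trans hs; rewrite leq_addl.
by apply: leq_ltn_trans hs; rewrite leq_addr.
Qed.

Lemma entryDZ (c : rat) (A B : 'M[{poly rat}]_2) a b :
  (c%:P *: A + B) a b = c%:P * A a b + B a b.
Proof. by rewrite !mxE. Qed.

Lemma part5 (c : rat) f g : isNF f -> isNF g ->
     phi (fun s => c * f s + g s) = c%:P *: phi f + phi g.
Proof.
move=> hf hg; apply/matrixP => a b; rewrite entryDZ; apply/polyP => k.
rewrite coefD coefCM !coef_phi //; last exact: isNF_lin.
case: a => [[|[|//]]] ?; case: b => [[|[|//]]] ? /=; case: k => //= *;
  by rewrite ?mulr0 ?addr0 ?opprD ?mulrN.
Qed.

Definition o0 : 'I_2 := @Ordinal 2 0 isT.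
Definition o1 : 'I_2 := @Ordinal 2 1 isT.

Lemma coefE_phi f g a b k : isNF f -> isNF g -> phi f = phi g ->
  phiCoef f a b k = phiCoef g a b k.
Proof.
move=> hf hg E.
case: a => [|[|a]]; case: b => [|[|b]];
  first [ by have := congr1 (fun A : 'M[{poly rat}]_2 => (A o0 o0)`_k) E; rewrite /= !coef_phi
        | by have := congr1 (fun A : 'M[{poly rat}]_2 => (A o0 o1)`_k) E; rewrite /= !coef_phi
        | by have := congr1 (fun A : 'M[{poly rat}]_2 => (A o1 o0)`_k) E; rewrite /= !coef_phi
        | by have := congr1 (fun A : 'M[{poly rat}]_2 => (A o1 o1)`_k) E; rewrite /= !coef_phi ].
Qed.

Lemma part6 f g : isNF f -> isNF g -> phi f = phi g -> f =1 g.
Proof.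
move=> hf hg E s.
case cs: (chainF s); last by rewrite hf.1 ?hg.1 ?cs.
have [E' hc n0] := chainF_inv cs; rewrite E'.
move: (last 0%N s) (size s) hc n0 => c n hc n0.
have ef a b k := coefE_phi a b k hf hg E.
rewrite -(odd_double_half n); move: n0; rewrite -{1}(odd_double_half n).
case: (odd n) => /= n0.
  case/orP: hc => /eqP ->.
    by have := ef 0%N 1%N n./2.
  by have := ef 1%N 0%N n./2.+1.
have k0 : (0 < n./2)%N by move: n0; rewrite add0n double_gt0.
case: (n./2) k0 => // k _; rewrite add0n.
case/orP: hc => /eqP ->.
  by have := ef 0%N 0%N k.+1; rewrite /= => /oppr_inj.
by have := ef 1%N 1%N k.+1; rewrite /= => /oppr_inj.
Qed.

Definition fA (A : 'M[{poly rat}]_2) (s : seq nat) : rat :=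
  if chainF s then
    (if odd (size s) then
       (if last 0%N s == 1%N then (A o0 o1)`_((size s)./2) else (A o1 o0)`_((size s)./2).+1)
     else (if last 0%N s == 1%N then - (A o0 o0)`_((size s)./2) else - (A o1 o1)`_((size s)./2)))
  else 0.

Lemma isNF_fA A : isNF (fA A).
Proof.
split; first by move=> s /negbTE hs; rewrite /fA hs.
exists (size (A o0 o0) + size (A o0 o1) + size (A o1 o0) + size (A o1 o1))%N.*2.
move=> s hs; rewrite /fA; case: ifP => // _.
have : (size (A o0 o0) + size (A o0 o1) + size (A o1 o0) + size (A o1 o1) <= (size s)./2)%N.
  by rewrite geq_half_double ltnW.
move: ((size s)./2) => m /ssrnat.leP; rewrite -!plusE => hm.
have h00 : (size (A o0 o0) <= m)%N by apply/ssrnat.leP; lia.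
have h01 : (size (A o0 o1) <= m)%N by apply/ssrnat.leP; lia.
have h10 : (size (A o1 o0) <= m)%N by apply/ssrnat.leP; lia.
have h11 : (size (A o1 o1) <= m)%N by apply/ssrnat.leP; lia.
by rewrite !nth_default ?oppr0 ?if_same // ltnW.
Qed.

Lemma fA_Lch A c n : col12 c -> (0 < n)%N -> fA A (Lch c n) =
  (if odd n then
       (if c == 1%N then (A o0 o1)`_(n./2) else (A o1 o0)`_(n./2).+1)
     else (if c == 1%N then - (A o0 o0)`_(n./2) else - (A o1 o1)`_(n./2))).
Proof.
move=> hc n0; rewrite /fA chainF_Lch // size_Lch.
by case: n n0 => // n _; rewrite last_Lch // col12_3.
Qed.

Lemma half_dS k : (k.*2.+1)./2 = k.
Proof. by rewrite /= uphalf_double. Qed.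

Lemma part7 A : isLglP A -> exists f, isNF f /\ phi f = A.
Proof.
case=> h00 [h10 h11].
have e0 : (0 : 'I_2) = o0 by apply/val_inj.
have e1 : (1 : 'I_2) = o1 by apply/val_inj.
rewrite e0 e1 in h00 h10 h11.
exists (fA A); split; first exact: isNF_fA.
apply/matrixP => a b; apply/polyP => k; rewrite (coef_phi (isNF_fA A)).
case: a => [[|[|//]]] ha; case: b => [[|[|//]]] hb.
- have -> : Ordinal ha = o0 by apply/val_inj.
  have -> : Ordinal hb = o0 by apply/val_inj.
  case: k => [|k] /=; first by rewrite h00.
  by rewrite fA_Lch // odd_double doubleK opprK.
- have -> : Ordinal ha = o0 by apply/val_inj.
  have -> : Ordinal hb = o1 by apply/val_inj.
  by rewrite /= fA_Lch //= odd_double uphalf_double.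
- have -> : Ordinal ha = o1 by apply/val_inj.
  have -> : Ordinal hb = o0 by apply/val_inj.
  case: k => [|k] /=; first by rewrite h10.
  by rewrite fA_Lch //= odd_double uphalf_double.
- have -> : Ordinal ha = o1 by apply/val_inj.
  have -> : Ordinal hb = o1 by apply/val_inj.
  case: k => [|k] /=; first by rewrite h11.
  by rewrite fA_Lch // odd_double doubleK opprK.
Qed.

Lemma sum_parity (F : nat -> rat) K :
  \sum_(r < K.*2) F r = \sum_(m < K) F m.*2 + \sum_(m < K) F m.*2.+1.
Proof.
elim: K => [|K IH]; first by rewrite !big_ord0 addr0.
rewrite doubleS !big_ord_recr /= IH.
by rewrite -!addrA; congr (_ + _); rewrite addrCA.
Qed.

Lemma prodF_par f g c n K : f [::] = 0 -> g [::] = 0 -> col12 c -> (n < K.*2)%N ->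
  prodF f g (Lch c n) =
    \sum_(m < K) f (Lch c (n - m.*2)) * g (Lch c m.*2)
  + \sum_(m < K) f (Lch (3 - c) (n - m.*2.+1)) * g (Lch c m.*2.+1).
Proof.
move=> hf hg hc nK; rewrite (prodF_Lch (R := K.*2)) //.
apply: eq_trans (sum_parity (fun r : nat => f (Lch (cc c r) (n - r)) * g (Lch c r)) K) _.
by congr (_ + _); apply: eq_bigr => m _; rewrite /= ?cc_even ?cc_odd.
Qed.

Lemma A1 k m : (m <= k)%N -> (k.*2.+1 - m.*2 = (k - m).*2.+1)%N. Proof. by move=> h; nlia. Qed.
Lemma A2 k m : (m <= k)%N -> (k.*2.+1 - m.*2.+1 = (k - m).*2)%N. Proof. by move=> h; nlia. Qed.
Lemma A3 k m : (k.*2 - m.*2 = (k - m).*2)%N. Proof. nlia. Qed.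
Lemma A4 k m : (k.*2 - m.*2.+1 = (k - m).*2.-1)%N. Proof. nlia. Qed.
Lemma A5 k m : (m <= k)%N -> (k.*2.+1 - m.*2 = (k.+1 - m).*2.-1)%N. Proof. by move=> h; nlia. Qed.
Lemma A6 k m : (m < k)%N -> (k.*2 - m.*2.+1 = (k - m.+1).*2.+1)%N. Proof. by move=> h; nlia. Qed.

Lemma core01 f g k : f [::] = 0 -> g [::] = 0 ->
  phiCoef (prodF f g) 0 1 k = - \sum_(m < k.+1) (phiCoef g 0 0 m * phiCoef f 0 1 (k - m)
                                            + phiCoef g 0 1 m * phiCoef f 1 1 (k - m)).
Proof.
move=> hf hg; rewrite pc01 (prodF_par (K := k.+1)) //.
rewrite big_split opprD -!sumrN; congr (_ + _); apply: eq_bigr => m _;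
  have hm : (m <= k)%N := ltn_ord m.
  by rewrite pc00 // pc01 A1 // mulNr opprK mulrC.
by rewrite pc01 pc11 // A2 //= mulrN opprK mulrC.
Qed.

Lemma core00 f g k : f [::] = 0 -> g [::] = 0 ->
  phiCoef (prodF f g) 0 0 k = - \sum_(m < k.+1) (phiCoef g 0 0 m * phiCoef f 0 0 (k - m)
                                            + phiCoef g 0 1 m * phiCoef f 1 0 (k - m)).
Proof.
move=> hf hg; rewrite pc00 // (prodF_par (K := k.+1)) //.
rewrite big_split; congr (- (_ + _)); apply: eq_bigr => m _.
  by rewrite !pc00 // A3 mulrNN mulrC.
by rewrite pc01 pc10 // A4 /= mulrC.
Qed.

Lemma core11 f g k : f [::] = 0 -> g [::] = 0 ->
  phiCoef (prodF f g) 1 1 k = - \sum_(m < k.+1) (phiCoef g 1 0 m * phiCoef f 0 1 (k - m)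
                                            + phiCoef g 1 1 m * phiCoef f 1 1 (k - m)).
Proof.
move=> hf hg; rewrite pc11 // (prodF_par (K := k.+1)) //.
rewrite big_split [X in _ = - X]addrC; congr (- (_ + _)).
  by apply: eq_bigr => m _; rewrite !pc11 // A3 mulrNN mulrC.
rewrite [in RHS]big_ord_recl [in LHS]big_ord_recr /= mul0r add0r.
rewrite (_ : (k.*2 - k.*2.+1)%N = 0%N); last by nlia.
rewrite Lch0 hf mul0r addr0.
apply: eq_bigr => m _; have hm : (m < k)%N := ltn_ord m.
by rewrite /bump leq0n add1n add0n A6 // mulrC.
Qed.

Lemma core10 f g k : f [::] = 0 -> g [::] = 0 ->
  phiCoef (prodF f g) 1 0 k = - \sum_(m < k.+1) (phiCoef g 1 0 m * phiCoef f 0 0 (k - m)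
                                            + phiCoef g 1 1 m * phiCoef f 1 0 (k - m)).
Proof.
move=> hf hg; case: k => [|k].
  rewrite big_ord1 /=.
  by rewrite !mulr0 addr0 oppr0.
rewrite pc10 ?prodF_nil // (_ : (k.+1.*2.-1 = k.*2.+1)%N) // (prodF_par (K := k.+1)) //.
rewrite big_split [X in _ = - X]addrC opprD -!sumrN; congr (_ + _).
  under [in RHS]eq_bigr => m _ do rewrite pc11 // pc10 //.
  rewrite [in RHS]big_ord_recr /= subnn /= hf mulr0 oppr0 addr0.
  apply: eq_bigr => m _; have hm : (m <= k)%N := ltn_ord m.
  by rewrite A5 // mulNr opprK mulrC.
under [in RHS]eq_bigr => m _ do rewrite pc10 // pc00 //.
rewrite [in RHS]big_ord_recl /= hg mul0r oppr0 add0r.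
apply: eq_bigr => m _; have hm : (m <= k)%N := ltn_ord m.
by rewrite /bump leq0n add1n add0n subSS A2 // mulrN opprK mulrC.
Qed.

Lemma isNF_prodF f g : isNF f -> isNF g -> isNF (prodF f g).
Proof.
move=> hf hg; split; first by move=> s hs; rewrite /prodF (negbTE hs).
exists (suppBound f + suppBound g)%N => t ht.
case ct: (chainF t); last by rewrite /prodF ct.
rewrite prodF_take //; apply: big1_seq => p /andP[_]; rewrite mem_iota add0n => /andP[_ hp].
have hp1 : (p.+1 <= size t)%N by move: hp; case: (size t) => // n /= /leqW.
case: (ltnP (suppBound f) p.+1) => h1.
  by rewrite (suppBound_spec hf) ?mul0r // size_takel.
rewrite (suppBound_spec hg) ?mulr0 // size_drop.
move/ssrnat.ltP: ht; move/ssrnat.leP: h1; move/ssrnat.leP: hp1 => hp1 h1 ht.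
apply/ssrnat.ltP; rewrite -?plusE -?minusE in ht *; lia.
Qed.

Lemma isNF_brF f g : isNF f -> isNF g -> isNF (brF f g).
Proof.
move=> hf hg; have [h1 [N1 b1]] := isNF_prodF hf hg; have [h2 [N2 b2]] := isNF_prodF hg hf.
split; first by move=> s hs; rewrite /brF h1 ?h2 ?subr0.
exists (N1 + N2)%N => s hs; rewrite /brF b1 ?b2 ?subr0 //.
  by apply: leq_ltn_trans hs; rewrite leq_addl.
by apply: leq_ltn_trans hs; rewrite leq_addr.
Qed.

Lemma phiCoef_brF f g a b k :
  phiCoef (brF f g) a b k = phiCoef (prodF f g) a b k - phiCoef (prodF g f) a b k.
Proof.
rewrite /brF; case: a => [|[|a]]; case: b => [|[|b]]; case: k => [|k] /=;
  by rewrite ?subr0 ?opprB ?opprD ?opprK // addrC.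
Qed.

Lemma entryM (A B : 'M[{poly rat}]_2) a b k :
  ((A * B) a b)`_k = \sum_(m < k.+1) ((A a o0)`_m * (B o0 b)`_(k - m)
                                  + (A a o1)`_m * (B o1 b)`_(k - m)).
Proof.
rewrite -mulmxE mxE big_ord_recl big_ord1 coefD !coefM -big_split.
have -> : (lift ord0 ord0 : 'I_2) = o1 by apply/val_inj.
by have -> : (ord0 : 'I_2) = o0 by apply/val_inj.
Qed.

Lemma entryB (A B C D : 'M[{poly rat}]_2) a b :
  (A * B - C * D) a b = (A * B) a b - (C * D) a b.
Proof. by rewrite !mxE. Qed.

Lemma core f g (a b : 'I_2) k : f [::] = 0 -> g [::] = 0 ->
  phiCoef (prodF f g) a b k = - \sum_(m < k.+1) (phiCoef g a o0 m * phiCoef f o0 b (k - m)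
                                            + phiCoef g a o1 m * phiCoef f o1 b (k - m)).
Proof.
move=> hf hg.
case: a => [[|[|//]]] ?; case: b => [[|[|//]]] ?.
- exact: core00.
- exact: core01.
- exact: core10.
- exact: core11.
Qed.

Lemma part8 f g : isNF f -> isNF g -> phi (brF f g) = brL (phi f) (phi g).
Proof.
move=> hf hg; apply/matrixP => a b; rewrite /brL entryB; apply/polyP => k.
rewrite coefB !entryM (coef_phi (isNF_brF hf hg)) phiCoef_brF.
rewrite !core ?isNF_nil //.
under [X in _ = X - _]eq_bigr => m _ do rewrite !(coef_phi hf) !(coef_phi hg).
under [X in _ = _ - X]eq_bigr => m _ do rewrite !(coef_phi hf) !(coef_phi hg).
by rewrite opprK addrC.
Qed.

Theorem mainTheorem5 :
  (* brackets of basis elements *)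
  (forall (i j k l : nat), (i == 1%N) || (i == 2%N) -> (j == 1%N) || (j == 2%N) ->
     (0 < k)%N -> (0 < l)%N ->
     brF (deltaF (Lch i k.*2)) (deltaF (Lch j l.*2)) =1 (fun _ => 0)) /\
  (forall (i j k l : nat), (i == 1%N) || (i == 2%N) -> (j == 1%N) || (j == 2%N) ->
     (0 < k)%N ->
     brF (deltaF (Lch i k.*2)) (deltaF (Lch j l.*2.+1)) =1
       (fun s => (if i == j then -1 else 1) * deltaF (Lch j (k + l).*2.+1) s)) /\
  (forall (i j k l : nat), (i == 1%N) || (i == 2%N) -> (j == 1%N) || (j == 2%N) ->
     brF (deltaF (Lch i k.*2.+1)) (deltaF (Lch j l.*2.+1)) =1
       (fun s => deltaF (Lch j (k + l).+1.*2) s - deltaF (Lch i (k + l).+1.*2) s)) /\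
  (* phi is an isomorphism of Lie algebras n_F -> L gl_2^+ *)
  (forall f, isNF f -> isLglP (phi f)) /\
  (forall (c : rat) f g, isNF f -> isNF g ->
     phi (fun s => c * f s + g s) = c%:P *: phi f + phi g) /\
  (forall f g, isNF f -> isNF g -> phi f = phi g -> f =1 g) /\
  (forall A, isLglP A -> exists f, isNF f /\ phi f = A) /\
  (forall f g, isNF f -> isNF g -> phi (brF f g) = brL (phi f) (phi g)).
Proof.
split; first exact: part1.
split; first exact: part2.
split; first exact: part3.
split; first exact: part4.
split; first exact: part5.
split; first exact: part6.
split; first exact: part7.
exact: part8.
Qed.
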